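(* There exists a function $h(k,\Delta)$ with $h(k,\Delta)=\Theta\big((\Delta-1)^{k/12}\big)$ as $k\to\infty$ such that for all integers $\Delta$ and $k$, only finitely many (finite, simple, connected) graphs $G$ of maximum degree $\Delta$ satisfy $g_k(G)<h(k,\Delta)$.
   Context: For integers $k\geqslant 0$ and $\Delta$, let $f(k,\Delta)=\Delta\sum_{i=0}^{k-1}(\Delta-1)^i$ (the number of non-root nodes of a $\Delta$-ary tree of height $k$). For a graph $G$, its $k$-th power $G^k$ is the graph on $V(G)$ in which two distinct vertices are adjacent iff their distance in $G$ is at most $k$. $\chi$ denotes the chromatic number and $\Delta(G)$ the maximum degree of $G$. The $k$-gap of $G$ is $g_k(G)=f(k,\Delta(G))+1-\chi(G^k)$. *)

(* Defs.v *)
From mathcomp Require Import all_boot.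
From Stdlib Require Import Reals.

Set Implicit Arguments.
Unset Strict Implicit.
Unset Printing Implicit Defensive.

Definition simple_graph (V : finType) (e : rel V) : Prop :=
  symmetric e /\ irreflexive e.

Definition connected_graph (V : finType) (e : rel V) : Prop :=
  forall x y : V, connect e x y.

Definition deg (V : finType) (e : rel V) (x : V) : nat := #|[set y | e x y]|.
Definition maxdeg (V : finType) (e : rel V) : nat := \max_(x : V) deg e x.

Definition nbhd (V : finType) (e : rel V) (A : {set V}) : {set V} :=
  [set y | [exists x in A, e x y]].
Fixpoint within (V : finType) (e : rel V) (n : nat) (x : V) : {set V} :=
  match n with
  | 0 => [set x]
  | n'.+1 => within e n' x :|: nbhd e (within e n' x)
  end.

Definition gpow (V : finType) (e : rel V) (k : nat) : rel V :=
  fun x y => (x != y) && (y \in within e k x).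

Definition colorable (V : finType) (adj : rel V) (n : nat) : bool :=
  [exists c : {ffun V -> 'I_n}, [forall x, [forall y, adj x y ==> (c x != c y)]]].

Lemma colorable_card (V : finType) (adj : rel V) (irr : irreflexive adj) :
  exists n, colorable adj n.
Proof.
exists #|V|; apply/existsP; exists [ffun x => enum_rank x].
apply/forallP => x; apply/forallP => y; apply/implyP => Hxy.
rewrite !ffunE; apply/negP => /eqP /enum_rank_inj Exy.
by rewrite Exy irr in Hxy.
Qed.


Definition loopless (V : finType) (adj : rel V) : rel V :=
  fun x y => (x != y) && adj x y.

Lemma loopless_irr (V : finType) (adj : rel V) : irreflexive (loopless adj).
Proof. by move=> x; rewrite /loopless eqxx. Qed.

Definition chi (V : finType) (adj : rel V) : nat :=
  ex_minn (colorable_card (loopless_irr adj)).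

Definition f (k D : nat) : nat := D * \sum_(i < k) (D - 1) ^ i.

Definition gap (V : finType) (e : rel V) (k : nat) : R :=
  (INR (f k (maxdeg e) + 1) - INR (chi (gpow e k)))%R.

(* Main.v *)
Require Import Defs.
From mathcomp Require Import all_boot.
From Stdlib Require Import Reals.
From Stdlib Require Import Lra Psatz.
From mathcomp Require Import zify.

Set Implicit Arguments.
Unset Strict Implicit.
Unset Printing Implicit Defensive.



Lemma card_bigcup_le (T I : finType) (P : pred I) (F : I -> {set T}) :
  #|\bigcup_(i | P i) F i| <= \sum_(i | P i) #|F i|.
Proof.
elim/big_rec2: _ => [|i A n _ H]; first by rewrite cards0.
by rewrite (leq_trans (leq_card_setU _ _)) // leq_add2l.
Qed.

Section Within.
Variables (V : finType) (e : rel V).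

Lemma withinP n x u :
  reflect (exists p, [/\ path e x p, last x p = u & size p <= n])
          (u \in within e n x).
Proof.
apply: (iffP idP).
  elim: n u => [|n IH] u /=.
    by rewrite inE => /eqP ->; exists [::].
  rewrite inE => /orP [/IH [p [Hp Hl Hs]]|].
    by exists p; split => //; rewrite ltnW.
  rewrite inE => /existsP [w /andP [/IH [p [Hp Hl Hs]] Hwu]].
  exists (rcons p u); rewrite rcons_path last_rcons size_rcons Hp Hl Hwu.
  by split.
elim: n u => [|n IH] u [p [Hp Hl Hs]] /=.
  by move: Hs; rewrite leqn0 => /nilP Hp0; subst p; rewrite inE -Hl.
rewrite inE; case: (leqP (size p) n) => Hsn.
  by rewrite IH //; exists p.
move: Hp Hl Hs Hsn; case/lastP: p => [|p w] //.
rewrite rcons_path last_rcons size_rcons ltnS => /andP [Hp Hw] <- Hs _.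
apply/orP; right; rewrite inE; apply/existsP; exists (last x p).
by rewrite Hw andbT IH //; exists p.
Qed.

Lemma within0 x : within e 0 x = [set x].
Proof. by []. Qed.

Lemma within_self n x : x \in within e n x.
Proof. by apply/withinP; exists [::]. Qed.

Lemma within_mono m n x : m <= n -> within e m x \subset within e n x.
Proof.
move=> Hmn; apply/subsetP => u /withinP [p [Hp Hl Hs]].
by apply/withinP; exists p; split => //; apply: leq_trans Hmn.
Qed.

Lemma within_trans a b x w u :
  w \in within e a x -> u \in within e b w -> u \in within e (a + b) x.
Proof.
move=> /withinP [p [Hp Hl Hs]] /withinP [q [Hq Hl' Hs']].
apply/withinP; exists (p ++ q); rewrite cat_path last_cat Hl Hp Hq Hl'.
by split => //; rewrite size_cat leq_add.
Qed.

Lemma within_cons n x y u :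
  e x y -> u \in within e n y -> u \in within e n.+1 x.
Proof.
move=> Hxy /withinP [p [Hp Hl Hs]]; apply/withinP; exists (y :: p).
by rewrite /= Hxy Hp.
Qed.

Lemma within_first n x u :
  u \in within e n.+1 x -> u = x \/ exists2 y, e x y & u \in within e n y.
Proof.
move=> /withinP [[|y p] [Hp Hl Hs]]; first by left.
right; exists y; first by case/andP: Hp.
by apply/withinP; exists p; case/andP: Hp => _ Hp.
Qed.

Hypothesis esym : symmetric e.

Lemma within_sym n x u : (u \in within e n x) = (x \in within e n u).
Proof.
suff H : forall x u, u \in within e n x -> x \in within e n u.
  by apply/idP/idP; apply: H.
move=> {}x {}u /withinP [p [Hp Hl Hs]]; apply/withinP.
exists (rev (belast x p)); split.
- have := rev_path e x p; rewrite Hl => ->.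
  by rewrite (eq_path (e' := e)) // => a b /=; rewrite esym.
- case: p Hp Hl Hs => [|y p] //= _ _ _; by rewrite rev_cons last_rcons.
- by rewrite size_rev size_belast.
Qed.

End Within.



Section Rs.
Variables (V : finType) (e : rel V).

Fixpoint Rs (t : nat) (y x : V) : {set V} :=
  match t with
  | 0 => [set y]
  | t'.+1 => y |: \bigcup_(z | e y z && (z != x)) Rs t' z y
  end.

Lemma Rs_self t y x : y \in Rs t y x.
Proof. by case: t => [|t] /=; rewrite !inE ?eqxx. Qed.

Lemma Rs_S t y x :
  Rs t.+1 y x = y |: \bigcup_(z | e y z && (z != x)) Rs t z y.
Proof. by []. Qed.

Lemma Rs_monoS t y x : Rs t y x \subset Rs t.+1 y x.
Proof.
elim: t y x => [|t IH] y x.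
  by rewrite /= sub1set !inE eqxx.
rewrite [Rs t.+1 y x]Rs_S [Rs t.+2 y x]Rs_S setUS //.
apply/subsetP => u /bigcupP [z Hz Hu]; apply/bigcupP; exists z => //.
exact: (subsetP (IH z y)).
Qed.

Lemma Rs_mono s t y x : s <= t -> Rs s y x \subset Rs t y x.
Proof.
move=> /subnKC <-; elim: (t - s) => [|d IH]; first by rewrite addn0.
by rewrite addnS (subset_trans IH) // Rs_monoS.
Qed.

Lemma Rs_within t y x : Rs t y x \subset within e t y.
Proof.
elim: t y x => [|t IH] y x; first by rewrite subxx.
rewrite Rs_S; apply/subsetP => u; rewrite in_setU1 => /orP [/eqP ->|].
  exact: within_self.
move=> /bigcupP [z /andP [Hz _] Hu].
exact: within_cons Hz (subsetP (IH z y) _ Hu).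
Qed.

Hypothesis esym : symmetric e.
Hypothesis eirr : irreflexive e.

Lemma within_cover t x y :
  e x y -> within e t y \subset Rs t y x :|: within e t.-1 x.
Proof.
elim: t x y => [|t IH] x y Hxy.
  by apply/subsetP => u Hu; rewrite inE Hu.
apply/subsetP => u /within_first [->|[z Hyz Hu]].
  by rewrite inE Rs_self.
have [/eqP Ezx|Hzx] := boolP (z == x).
  by subst z; rewrite inE Hu orbT.
have := subsetP (IH y z Hyz) u Hu; rewrite in_setU => /orP [H|H].
  rewrite in_setU; apply/orP; left; rewrite Rs_S in_setU1; apply/orP; right.
  by apply/bigcupP; exists z => //; rewrite Hyz Hzx.
case: t IH Hu H => [|t] IH Hu H /=.
  rewrite within0 in_set1 in H; rewrite (eqP H) in_setU; apply/orP; left.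
  by rewrite in_setU1 eqxx.
rewrite in_setU; apply/orP; right.
exact: within_cons Hxy H.
Qed.

Lemma within_Rs k v : within e k v \subset Rs k v v.
Proof.
elim: k {-2}k (leqnn k) => [|n IH] k Hk.
  by move: Hk; rewrite leqn0 => /eqP ->; rewrite subxx.
case: k Hk => [|k] Hk; first by rewrite subxx.
apply/subsetP => u /within_first [->|[y Hvy Hu]]; first exact: Rs_self.
have := subsetP (within_cover k Hvy) u Hu; rewrite in_setU => /orP [H|H].
  rewrite Rs_S in_setU1; apply/orP; right; apply/bigcupP; exists y => //.
  by rewrite Hvy; apply/eqP => Eyv; subst y; rewrite eirr in Hvy.
have Hk' : k.-1 <= n by move: Hk; rewrite ltnS => /(leq_trans (leq_pred _)).
apply: (subsetP (@Rs_mono k.-1 k.+1 v v (leq_trans (leq_pred k) (leqnSn k)))).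
exact: (subsetP (IH _ Hk')).
Qed.

Variable D : nat.
Hypothesis degD : forall x, deg e x <= D.

Definition M t := \sum_(i < t.+1) (D - 1) ^ i.

Lemma M0 : M 0 = 1.
Proof. by rewrite /M big_ord1. Qed.

Lemma MS t : M t.+1 = 1 + (D - 1) * M t.
Proof.
rewrite /M big_ord_recl big_distrr /=; congr (_ + _).
Qed.

Lemma M_monoS t : M t <= M t.+1.
Proof. by rewrite /M [X in _ <= X]big_ord_recr /= leq_addr. Qed.

Lemma M_mono s t : s <= t -> M s <= M t.
Proof.
move=> /subnKC <-; elim: (t - s) => [|d IH]; first by rewrite addn0.
by rewrite addnS (leq_trans IH) // M_monoS.
Qed.

Lemma f_M k : Defs.f k.+1 D = D * M k.
Proof. by []. Qed.

Lemma nbrs_card y x : e x y -> #|[set z | e y z && (z != x)]| < D.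
Proof.
move=> Hxy; apply: leq_trans (degD y); rewrite /deg.
rewrite (cardsD1 x [set z | e y z]) inE esym Hxy add1n ltnS.
by apply: subset_leq_card; apply/subsetP => z; rewrite !inE andbC.
Qed.

Lemma sum_le (P : pred V) (F : V -> nat) b :
  (forall z, P z -> F z <= b) -> \sum_(z | P z) F z <= #|[set z | P z]| * b.
Proof.
move=> H; rewrite cardsE -sum_nat_const; apply: leq_sum => z Hz; exact: H.
Qed.

Lemma Rs_card t y x : e x y -> #|Rs t y x| <= M t.
Proof.
elim: t y x => [|t IH] y x Hxy; first by rewrite cards1 M0.
rewrite Rs_S MS (leq_trans (leq_card_setU _ _)) // cards1 leq_add2l.
apply: leq_trans (card_bigcup_le _ _) _.
apply: leq_trans (sum_le (b := M t) _) _.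
  by move=> z /andP [Hz _]; apply: IH.
rewrite leq_mul2r; apply/orP; right.
have := nbrs_card Hxy; rewrite (cardsE _) => H.
lia. Qed.

Fixpoint nbpath (x y : V) (p : seq V) : bool :=
  match p with
  | [::] => true
  | q :: p' => [&& e y q, q != x & nbpath y q p']
  end.

Lemma cardP_le (P : pred V) : #|P| = #|[set z | P z]|.
Proof. by rewrite cardsE. Qed.

Lemma Hlem t : forall y x p s (A : {set V}), e x y -> nbpath x y p ->
  size p + s <= t ->
  Rs s (last y p) (last x (belast y p)) \subset A ->
  #|Rs t y x :\: A| + M s <= M t.
Proof.
elim: t => [|t IH] y x p s A Hxy Hp Hs HA.
  move: Hs; rewrite leqn0 addn_eq0 => /andP [/nilP Hp0 /eqP Hs0].
  subst p s; rewrite /= in HA.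
  have -> : Rs 0 y x :\: A = set0 by apply/eqP; rewrite setD_eq0.
  by rewrite cards0.
have HnP := nbrs_card Hxy.
case: p Hp Hs HA => [|q p'] Hp Hs HA.
  rewrite /= in HA Hs.
  have HyA : y \in A by apply: (subsetP HA); exact: Rs_self.
  have Hsub : Rs t.+1 y x :\: A \subset
      \bigcup_(z | e y z && (z != x)) (Rs t z y :\: A).
    apply/subsetP => u; rewrite Rs_S !inE => /andP [HuA /orP [/eqP Hu|]].
      by subst u; rewrite HyA in HuA.
    move=> /bigcupP [z Hz Hu]; apply/bigcupP; exists z => //.
    by rewrite inE HuA.
  apply: leq_trans (leq_add (leq_trans (subset_leq_card Hsub)
                                       (card_bigcup_le _ _)) (leqnn _)) _.
  case: s Hs HA => [|s] Hs HA.
    rewrite M0 MS addnC leq_add2l.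
    apply: leq_trans (sum_le (b := M t) _) _.
      move=> z /andP [Hz _]; apply: leq_trans (subset_leq_card (subsetDl _ _)) _.
      exact: Rs_card.
    by rewrite leq_mul2r; apply/orP; right; lia.
  have Hz : forall z, e y z && (z != x) ->
      #|Rs t z y :\: A| <= M t - M s.
    move=> z /andP [Hyz Hzx].
    have := IH z y [::] s A Hyz isT Hs.
    have HA' : Rs s z y \subset A.
      apply: subset_trans HA; apply/subsetP => u Hu; rewrite Rs_S in_setU1.
      by apply/orP; right; apply/bigcupP; exists z => //; rewrite Hyz.
    move=> /(_ HA'); lia.
  apply: leq_trans (leq_add (sum_le Hz) (leqnn _)) _.
  rewrite MS.
  have Hms : M s <= M t by apply: M_mono; lia.
  set n := #|_| in HnP *.
  have : n * (M t - M s) <= (D - 1) * (M t - M s).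
    by rewrite leq_mul2r; apply/orP; right; lia.
  rewrite !mulnBr.
  have : (D - 1) * M s <= (D - 1) * M t by rewrite leq_mul2l Hms orbT.
  rewrite MS; lia.
case/and3P: Hp => Hyq Hqx Hp'.
rewrite /= ltnS in Hs.
have Hq := IH q y p' s A Hyq Hp' Hs HA.
have Hsub : Rs t.+1 y x :\: A \subset
    [set y] :|: (\bigcup_(z | e y z && (z != x) && (z != q)) Rs t z y)
      :|: (Rs t q y :\: A).
  apply/subsetP => u; rewrite Rs_S !inE => /andP [HuA /orP [->//|]].
  move=> /bigcupP [z /andP [Hyz Hzx] Hu].
  have [Ezq|Hzq] := eqVneq z q.
    by subst z; rewrite Hu HuA !orbT.
  apply/orP; left; apply/orP; right; apply/bigcupP; exists z => //.
  by rewrite Hyz Hzx.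
apply: leq_trans (leq_add (subset_leq_card Hsub) (leqnn _)) _.
apply: leq_trans (leq_add (leq_card_setU _ _) (leqnn _)) _.
apply: leq_trans (leq_add (leq_add (leq_card_setU _ _) (leqnn _)) (leqnn _)) _.
rewrite cards1 MS.
have H1 := card_bigcup_le (fun z => e y z && (z != x) && (z != q))
                          (fun z => Rs t z y).
have H2 : \sum_(z | e y z && (z != x) && (z != q)) #|Rs t z y|
          <= #|[set z | e y z && (z != x) && (z != q)]| * M t.
  apply: sum_le => z /andP [/andP [Hyz _] _]; exact: Rs_card.
have H3 : #|[set z | e y z && (z != x) && (z != q)]|.+1
           <= #|[set z | e y z & z != x]|.
  rewrite [X in _ <= X](cardsD1 q) inE Hyq Hqx add1n ltnS.
  apply: subset_leq_card; apply/subsetP => z; rewrite !inE.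
  by case: (z == q); rewrite ?andbF ?andbT.
have H4 : #|[set z | e y z && (z != x) && (z != q)]| * M t <= (D - 2) * M t.
  by rewrite leq_mul2r; apply/orP; right; lia.
have H5 : (D - 1) * M t = (D - 2) * M t + M t.
  have [d Hd] : exists d, D = d.+2 by exists (D - 2); lia.
  rewrite Hd; have -> : d.+2 - 1 = d.+1 by lia.
  have -> : d.+2 - 2 = d by lia.
  by rewrite mulSn addnC.
lia.
Qed.

Lemma Htop k v p1 p s (A : {set V}) : e v p1 -> nbpath v p1 p ->
  size p + s <= k ->
  Rs s (last p1 p) (last v (belast p1 p)) \subset A ->
  #|Rs k.+1 v v :\: (v |: A)| + M s <= Defs.f k.+1 D.
Proof.
move=> Hv1 Hp Hs HA.
have Hq := Hlem Hv1 Hp Hs HA.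
have Hsub : Rs k.+1 v v :\: (v |: A) \subset
    (\bigcup_(z | e v z && (z != v) && (z != p1)) Rs k z v)
      :|: (Rs k p1 v :\: A).
  apply/subsetP => u; rewrite Rs_S !inE negb_or => /andP [/andP [Huv HuA]].
  rewrite (negbTE Huv) /= => /bigcupP [z /andP [Hyz Hzx] Hu].
  have [Ezq|Hzq] := eqVneq z p1.
    by subst z; rewrite Hu HuA !orbT.
  apply/orP; left; apply/bigcupP; exists z => //.
  by rewrite Hyz Hzx.
apply: leq_trans (leq_add (subset_leq_card Hsub) (leqnn _)) _.
apply: leq_trans (leq_add (leq_card_setU _ _) (leqnn _)) _.
rewrite f_M.
have H1 := card_bigcup_le (fun z => e v z && (z != v) && (z != p1))
                          (fun z => Rs k z v).
have H2 : \sum_(z | e v z && (z != v) && (z != p1)) #|Rs k z v|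
          <= #|[set z | e v z && (z != v) && (z != p1)]| * M k.
  apply: sum_le => z /andP [/andP [Hyz _] _]; exact: Rs_card.
have H3 : #|[set z | e v z && (z != v) && (z != p1)]| < D.
  apply: leq_trans (degD v); rewrite /deg.
  rewrite (cardsD1 p1 [set y | e v y]) inE Hv1 add1n ltnS.
  apply: subset_leq_card; apply/subsetP => z; rewrite !inE.
  by case: (z == p1); rewrite ?andbF ?andbT // => /andP [].
have H4 : #|[set z | e v z && (z != v) && (z != p1)]| * M k <= (D - 1) * M k.
  by rewrite leq_mul2r; apply/orP; right; lia.
have H5 : D * M k = (D - 1) * M k + M k.
  have [d Hd] : exists d, D = d.+1 by exists (D - 1); lia.
  rewrite Hd; have -> : d.+1 - 1 = d by lia.
  by rewrite mulSn addnC.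
lia.
Qed.

Lemma Rs_card_top k v : #|Rs k v v| <= 1 + Defs.f k D.
Proof.
case: k => [|k]; first by rewrite /= cards1.
rewrite Rs_S f_M (leq_trans (leq_card_setU _ _)) // cards1 leq_add2l.
apply: leq_trans (card_bigcup_le _ _) _.
apply: leq_trans (sum_le (b := M k) _) _.
  by move=> z /andP [Hz _]; apply: Rs_card.
rewrite leq_mul2r; apply/orP; right.
apply: leq_trans (degD v); rewrite /deg.
by apply: subset_leq_card; apply/subsetP => z; rewrite !inE => /andP [].
Qed.

End Rs.



Lemma greedy (V : finType) (adj : rel V) (n : nat) (Q : {set V})
    (c0 : V -> 'I_n.+1) (rho : V -> nat) :
  symmetric adj -> irreflexive adj ->
  (forall x y, x \in Q -> y \in Q -> adj x y -> c0 x != c0 y) ->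
  (forall v, v \notin Q ->
     #|c0 @: [set u in Q | adj v u]| +
     #|[set u | adj v u & (u \notin Q) && (rho v <= rho u)]| <= n) ->
  colorable adj n.+1.
Proof.
move=> asym airr HQ Hb.
have main : forall m (S : {set V}), #|S| <= m -> [disjoint S & Q] ->
    exists c : {ffun V -> 'I_n.+1}, (forall x, x \in Q -> c x = c0 x) /\
      (forall x y, x \in Q :|: S -> y \in Q :|: S -> adj x y -> c x != c y).
  elim=> [|m IH] S HS Hdis.
    move: HS; rewrite leqn0 cards_eq0 => /eqP ->.
    exists [ffun x => c0 x]; split => [x _|x y]; first by rewrite ffunE.
    by rewrite setU0 !ffunE; apply: HQ.
  have [/eqP S0|/set0Pn [w0 Hw0]] := boolP (S == set0).
    by apply: (IH S) => //; rewrite S0 cards0.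
  case: (arg_minnP rho Hw0) => w HwS0 Hwmin.
  have HwS : w \in S := HwS0.
  have HwQ : w \notin Q by move: Hdis; rewrite disjoint_sym => /disjointFl ->.
  have HS' : #|S :\ w| <= m by move: HS; rewrite (cardsD1 w) HwS.
  have Hdis' : [disjoint S :\ w & Q].
    by apply: disjointWl Hdis; apply: subsetDl.
  have [c [HcQ Hc]] := IH _ HS' Hdis'.
  pose F := c @: [set u in Q :|: (S :\ w) | adj w u].
  have HF : #|F| <= n.
    apply: leq_trans (Hb w HwQ).
    have HFs : F \subset (c0 @: [set u in Q | adj w u]) :|:
                          (c @: [set u in S :\ w | adj w u]).
      apply/subsetP => x /imsetP [u]; rewrite !inE => /andP [/orP [HuQ|HuS] Hwu] Ex; subst x.
        by apply/orP; left; rewrite HcQ //; apply/imsetP; exists u;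
           rewrite // inE HuQ Hwu.
      by apply/orP; right; apply/imsetP; exists u; rewrite // !inE HuS Hwu.
    apply: leq_trans (subset_leq_card HFs) _.
    apply: leq_trans (leq_card_setU _ _) _; rewrite leq_add2l.
    apply: leq_trans (leq_imset_card _ _) _.
    apply: subset_leq_card; apply/subsetP => u; rewrite !inE.
    move=> /andP [/andP [Huw HuS] Hwu]; rewrite Hwu /= Hwmin // andbT.
    by apply/negP => HuQ; move: Hdis; rewrite disjoint_sym => /disjointFl;
       move/(_ u HuS); rewrite HuQ.
  have [col Hcol] : exists col, col \notin F.
    case: (pickP (fun i => i \notin F)) => [i Hi|Hn]; first by exists i.
    have EF : F = setT.
      by apply/setP => i; rewrite inE; move: (Hn i) => /negbFE.
    by rewrite EF cardsT card_ord ltnn in HF.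
  exists [ffun x => if x == w then col else c x]; split.
    move=> x HxQ; rewrite ffunE; case: eqP => [Exw|_]; last exact: HcQ.
    by subst x; rewrite HxQ in HwQ.
  have memS : forall x, x \in Q :|: S -> x != w -> x \in Q :|: (S :\ w).
    by move=> x; rewrite !inE => /orP [->|->] ->; rewrite ?orbT.
  move=> x y Hx Hy Hxy; rewrite !ffunE.
  case: (eqVneq x w) => [Exw|Hxw]; case: (eqVneq y w) => [Eyw|Hyw].
  - by subst x y; rewrite airr in Hxy.
  - subst x; apply/eqP => Ec; move: Hcol; rewrite Ec; apply/negP/negPn.
    by apply/imsetP; exists y => //; rewrite inE memS // Hxy.
  - subst y; apply/eqP => Ec; move: Hcol; rewrite -Ec; apply/negP/negPn.
    by apply/imsetP; exists x => //; rewrite inE memS // asym Hxy.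
  - by apply: Hc => //; apply: memS.
have Hd : [disjoint ~: Q & Q] by rewrite disjoints_subset subxx.
have [c [_ Hc]] := main #|V| (~: Q) (max_card _) Hd.
apply/existsP; exists c; apply/forallP => x; apply/forallP => y.
by apply/implyP; apply: Hc; rewrite setUCr inE.
Qed.

Lemma chi_le (V : finType) (adj : rel V) n : colorable (loopless adj) n -> chi adj <= n.
Proof. by rewrite /chi; case: ex_minnP => m _ H /H. Qed.



Section Dist.
Variables (V : finType) (e : rel V).
Hypothesis esym : symmetric e.
Hypothesis econn : forall x y, connect e x y.

Lemma dist_ex x u : exists n, u \in within e n x.
Proof.
have /connectP [p Hp Hl] := econn x u.
by exists (size p); apply/withinP; exists p; split.
Qed.

Definition dist x u := ex_minn (dist_ex x u).

Lemma dist_within x u : u \in within e (dist x u) x.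
Proof. by rewrite /dist; case: ex_minnP. Qed.

Lemma dist_min x u n : u \in within e n x -> dist x u <= n.
Proof. by rewrite /dist; case: ex_minnP => m _ H /H. Qed.

Lemma dist_sym x u : dist x u = dist u x.
Proof.
apply/eqP; rewrite eqn_leq; apply/andP; split; apply: dist_min;
  rewrite within_sym //; exact: dist_within.
Qed.

Lemma within_dist n x u : (u \in within e n x) = (dist x u <= n).
Proof.
apply/idP/idP; first exact: dist_min.
by move=> H; apply: (subsetP (within_mono e x H)); apply: dist_within.
Qed.

Lemma seg x p i j : path e x p -> i <= j -> j <= size p ->
  nth x (x :: p) j \in within e (j - i) (nth x (x :: p) i).
Proof.
elim: p x i j => [|y p IH] x i j Hp Hij Hj.
  by move: Hj Hij; rewrite leqn0 => /eqP -> ; rewrite leqn0 => /eqP ->;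
     exact: within_self.
case/andP: Hp => Hxy Hp.
case: j Hij Hj => [|j] Hij Hj.
  by move: Hij; rewrite leqn0 => /eqP ->; exact: within_self.
rewrite [nth x _ j.+1]/= (set_nth_default y) //.
case: i Hij => [|i] Hij.
  rewrite subn0 /=; apply: within_cons Hxy _.
  by have := IH y 0 j Hp (leq0n _) Hj; rewrite subn0.
rewrite [nth x _ i.+1]/= (set_nth_default y) ?subSS; last first.
  by lia.
exact: IH.
Qed.

Lemma shortest x u : exists p,
  [/\ path e x p, last x p = u & size p = dist x u].
Proof.
have /withinP [p [Hp Hl Hs]] := dist_within x u.
exists p; split => //; apply/eqP; rewrite eqn_leq Hs /=.
by apply: dist_min; apply/withinP; exists p.
Qed.

Lemma shortest_nth x p m : path e x p -> size p = dist x (last x p) ->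
  m <= size p -> dist x (nth x (x :: p) m) = m.
Proof.
move=> Hp Hs Hm; apply/eqP; rewrite eqn_leq; apply/andP; split.
  by apply: dist_min; have := seg Hp (leq0n m) Hm; rewrite subn0.
rewrite leqNgt; apply/negP => Hlt.
have H1 := seg Hp Hm (leqnn _).
rewrite -last_nth in H1.
have H2 := within_trans (dist_within x (nth x (x :: p) m)) H1.
have := dist_min H2; rewrite -Hs; lia.
Qed.

Lemma nb_dist (d : V -> nat) p : forall x y, path e y p -> d y = (d x).+1 ->
  (forall m, m < size p -> d (nth y p m) = d y + m.+1) -> nbpath e x y p.
Proof.
elim: p => [|q p IH] x y //= /andP [Hyq Hp] Hdy Hd.
rewrite Hyq /=; apply/andP; split.
  by apply/eqP => Eqx; have := Hd 0 isT; rewrite Eqx /= Hdy; lia.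
apply: IH => //; first by have := Hd 0 isT; rewrite addn1.
move=> m Hm; rewrite (set_nth_default y) //; have := Hd m.+1 Hm; rewrite /= => ->.
by have := Hd 0 isT; rewrite /= => ->; lia.
Qed.

End Dist.



Section Ball.
Variables (V : finType) (e : rel V).
Hypothesis esym : symmetric e.
Hypothesis eirr : irreflexive e.
Hypothesis econn : forall x y, connect e x y.
Variable D : nat.
Hypothesis degD : forall x, deg e x <= D.

Lemma moore k v : #|within e k v :\ v| <= Defs.f k D.
Proof.
have H1 := subset_leq_card (within_Rs eirr k v).
have H2 := Rs_card_top esym degD k v.
move: (cardsD1 v (within e k v)); rewrite within_self add1n => H3.
lia.
Qed.

Lemma ball_path k v q i s (A : {set V}) :
  path e v q -> size q = dist econn v (last v q) -> 0 < i <= size q ->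
  i + s <= k.+1 ->
  within e s (nth v (v :: q) i) \subset A ->
  #|within e k.+1 v :\: (v |: A)| + M D s <= Defs.f k.+1 D.
Proof.
case: q => [|p1 q] Hq Hs /andP [Hi0 Hiq] His HA; first by move: Hiq; rewrite leqn0 => /eqP Hi; rewrite Hi in Hi0.
case/andP: (Hq) => Hvp1 Hq'.
have Hiq' : i <= (size q).+1 := Hiq.
set p := take i.-1 q.
have Hsp : size p = i.-1 by rewrite /p size_take; move: Hiq => /= Hiq; case: ltnP => //; move: Hiq'; lia.
have Hd : forall m, m <= size (p1 :: q) -> dist econn v (nth v (v :: p1 :: q) m) = m.
  by move=> m Hm; apply: shortest_nth.
have Hnb : nbpath e v p1 p.
  apply: (nb_dist (d := dist econn v)).
  - exact: take_path.
  - by have := Hd 1 isT; have := Hd 0 isT; rewrite /= => -> ->.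
  - move=> m Hm; rewrite /p nth_take; last by rewrite -Hsp.
    rewrite (set_nth_default v); last by move: Hm; rewrite Hsp /=; move: Hiq'; lia.
    have := Hd m.+2; rewrite /= => ->; last by move: Hm; rewrite Hsp /=; move: Hiq'; lia.
    by have := Hd 1 isT; rewrite /= => ->.
have Hlast : last p1 p = nth v (v :: p1 :: q) i.
  rewrite (last_nth v) Hsp /p.
  clear Hiq; case: i Hi0 Hiq' {His HA Hsp p Hnb} => [//|i] _ Hiq /=.
  case: i Hiq => [//|i] Hiq /=.
  rewrite nth_take //; apply: set_nth_default; move: Hiq => /=; lia.
have := Htop esym degD Hvp1 Hnb (s := s) (k := k) (A := A).
rewrite Hsp => /(_ _) H.
have H' : #|Rs e k.+1 v v :\: (v |: A)| + M D s <= Defs.f k.+1 D.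
  apply: H; first by move: Hiq'; lia.
  apply: subset_trans (Rs_within _ _ _ _) _; rewrite Hlast; exact: HA.
apply: leq_trans H'; rewrite leq_add2r; apply: subset_leq_card.
by apply: setSD; apply: within_Rs.
Qed.

End Ball.



Section Main.
Variables (V : finType) (e : rel V).
Hypothesis esym : symmetric e.
Hypothesis eirr : irreflexive e.
Hypothesis econn : forall x y, connect e x y.
Variable D : nat.
Hypothesis degD : forall x, deg e x <= D.
Variable k : nat.

Definition adj := loopless (gpow e k).

Lemma adjE v u : adj v u = (u \in within e k v :\ v).
Proof. by rewrite /adj /loopless /gpow !inE andbA andbb eq_sym. Qed.

Lemma adj_sym : symmetric adj.
Proof.
by move=> x y; rewrite !adjE !inE eq_sym (within_sym esym).
Qed.

Lemma adj_irr : irreflexive adj.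
Proof. exact: loopless_irr. Qed.

Notation dist := (dist econn).

Lemma nonproblem r v s : s < dist r v -> s.+1 + s <= k -> 0 < k ->
  #|within e k v :\: (v |: [set u | dist r u < dist r v])| + M D s
    <= Defs.f k D.
Proof.
move=> Hs Hsk Hk0.
have [qv [Hqv Hl Hsz]] := shortest econn v r.
have Hsz' : size qv = dist v (last v qv) by rewrite Hl.
have Hd : dist v r = dist r v by rewrite dist_sym.
case: k Hsk Hk0 => [//|k'] Hsk _.
apply: (ball_path esym eirr degD (i := s.+1) Hqv Hsz').
- by rewrite Hsz Hd /=.
- by [].
apply/subsetP => u Hu; rewrite inE.
have Hsq : s.+1 <= size qv by rewrite Hsz Hd.
have := seg Hqv Hsq (leqnn _).
rewrite -(last_nth v) Hl (within_sym esym) Hsz Hd => Hp.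
have := within_trans Hp Hu; rewrite within_dist => H.
by apply: leq_ltn_trans H _; lia.
Qed.

Lemma problem_bound r v z s a :
  v \in within e s r -> z \in within e a r -> z \notin within e s r ->
  s + a + s <= k -> 0 < k ->
  #|within e k v :\ v| + M D s <= Defs.f k D + #|within e s z|.
Proof.
move=> Hv Hz Hzs Hk Hk0.
have [qv [Hqv Hl Hsz]] := shortest econn v z.
have Hsz' : size qv = dist v (last v qv) by rewrite Hl.
have Hvz : z \in within e (s + a) v.
  by apply: within_trans Hz; rewrite (within_sym esym).
have Hi0 : 0 < size qv.
  rewrite lt0n; apply/negP => /eqP /size0nil Hq; subst qv.
  by rewrite /= in Hl; subst z; rewrite Hv in Hzs.
have Hia : size qv <= s + a by rewrite Hsz; apply: dist_min.
case: k Hk Hk0 => [//|k'] Hk _.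
have Hb := ball_path esym eirr degD (i := size qv) (s := s) (k := k')
  (A := within e s z) Hqv Hsz'.
rewrite Hi0 leqnn -(last_nth v) Hl subxx in Hb.
have {}Hb := Hb isT _ isT; have {}Hb := Hb (leq_trans _ Hk).
have Hb' : #|within e k'.+1 v :\: (v |: within e s z)| + M D s <= Defs.f k'.+1 D.
  by apply: Hb; lia.
have Hsub : within e k'.+1 v :\ v \subset
    (within e k'.+1 v :\: (v |: within e s z)) :|: within e s z.
  apply/subsetP => u; rewrite !inE.
  by case: (u \in within e s z); rewrite ?orbT ?orbF ?andbT ?andbF.
have := leq_trans (subset_leq_card Hsub) (leq_card_setU _ _).
lia.
Qed.

Lemma deficient s a g r z :
  3 * g <= M D s -> s.+1 + s <= k -> s + a + s <= k -> 0 < k ->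
  z \in within e a r -> z \notin within e s r ->
  #|within e s z| + g <= M D s ->
  colorable adj (Defs.f k D - g).+1.
Proof.
move=> Hg Hk1 Hk2 Hk0 Hz Hzs Hdef.
apply: (greedy (Q := set0) (c0 := fun _ => ord0) (rho := dist r)
          adj_sym adj_irr) => [x y|v _]; first by rewrite inE.
have -> : [set u in set0 | adj v u] = set0 by apply/setP => u; rewrite !inE.
rewrite imset0 cards0 add0n.
case: (leqP (dist r v) s) => Hvs.
  have Hv : v \in within e s r by rewrite within_dist.
  have H := problem_bound Hv Hz Hzs Hk2 Hk0.
  have Hsub : [set u | adj v u & (u \notin set0) && (dist r v <= dist r u)]
      \subset within e k v :\ v.
    by apply/subsetP => u; rewrite !inE adjE !inE => /andP [/andP [-> ->] _].
  have := subset_leq_card Hsub; lia.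
have H := nonproblem Hvs Hk1 Hk0.
have Hsub : [set u | adj v u & (u \notin set0) && (dist r v <= dist r u)]
    \subset within e k v :\: (v |: [set u | dist r u < dist r v]).
  apply/subsetP => u; rewrite !inE adjE !inE => /and3P [/andP [Huv Huk] _ H'].
  by rewrite negb_or (negbTE Huv) /= -leqNgt H' Huk.
have := subset_leq_card Hsub; lia.
Qed.

Lemma QX_card (X : {set V}) g (d : V) :
  g <= #|X| -> g <= #|[set u in X | index u (enum X) < g]|.
Proof.
move=> HgX.
pose fn := fun j : 'I_g => nth d (enum X) j.
have Hsz : size (enum X) = #|X| by rewrite -cardE.
have Hjs : forall j : 'I_g, j < size (enum X).
  by move=> j; rewrite Hsz; apply: leq_trans (ltn_ord _) HgX.
have Hinj : injective fn.
  move=> j1 j2; rewrite /fn => /eqP; rewrite nth_uniq ?enum_uniq //.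
    by move/eqP/val_inj.
have Hc : #|fn @: [set: 'I_g]| = g by rewrite card_imset // cardsT card_ord.
rewrite -{1}Hc.
apply: subset_leq_card; apply/subsetP => u /imsetP [j _ ->].
have Hj := Hjs j.
rewrite !inE /fn -(mem_enum X) mem_nth //=.
by rewrite index_uniq ?enum_uniq.
Qed.

Lemma index_inj (X : {set V}) u u' :
  u \in X -> u' \in X -> index u (enum X) = index u' (enum X) -> u = u'.
Proof.
move=> Hu Hu' Hi.
have E1 : nth u (enum X) (index u (enum X)) = u by apply: nth_index; rewrite mem_enum.
have E2 : nth u (enum X) (index u' (enum X)) = u' by apply: nth_index; rewrite mem_enum.
by rewrite -E1 Hi E2.
Qed.

Lemma pairs s g r (X Y : {set V}) :
  3 * g <= M D s -> M D s <= Defs.f k D -> s.+1 + s <= k -> 0 < k ->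
  (forall u u', u \in X -> u' \in Y -> u' \notin within e k u) ->
  (forall u, u \in X :|: Y -> u \notin within e s r) ->
  (forall v u, v \in within e s r -> u \in X :|: Y -> u \in within e k v) ->
  g <= #|X| -> g <= #|Y| ->
  colorable adj (Defs.f k D - g).+1.
Proof.
move=> Hg HMF Hk1 Hk0 FX F4 F5 HgX HgY.
set F := Defs.f k D.
have disj : forall u, u \in X -> u \notin Y.
  move=> u HuX; apply/negP => HuY.
  by have := FX u u HuX HuY; rewrite within_self.
set QX := [set u in X | index u (enum X) < g].
set QY := [set u in Y | index u (enum Y) < g].
set Q := QX :|: QY.
pose c0 := fun u : V => if u \in X then (inord (index u (enum X)) : 'I_(F - g).+1)
                       else inord (index u (enum Y)).
have HgF : g < (F - g).+1 by lia.
have Hb : forall i, i < g -> i < (F - g).+1.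
  by move=> i Hi; apply: ltn_trans Hi HgF.
have QXY : forall u, u \in Q -> u \in X :|: Y.
  by move=> u; rewrite !inE => /orP [/andP [-> _]|/andP [-> _]]; rewrite ?orbT.
have QXi : forall u, u \in Q -> u \in X -> index u (enum X) < g.
  move=> u; rewrite !inE => /orP [/andP [_ ->]//|/andP [HuY _] HuX].
  by have := disj u HuX; rewrite HuY.
have QYi : forall u, u \in Q -> u \notin X -> (u \in Y) && (index u (enum Y) < g).
  move=> u; rewrite !inE => /orP [/andP [HuX _]|/andP [-> ->]//].
  by rewrite HuX.
have HcQ : forall x y, x \in Q -> y \in Q -> adj x y -> c0 x != c0 y.
  move=> x y HxQ HyQ Hxy; rewrite /c0.
  have Hxy' : y \in within e k x by move: Hxy; rewrite adjE inE => /andP [].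
  have Hyx : x \in within e k y by rewrite (within_sym esym).
  have Hne : x != y by move: Hxy; rewrite adjE !inE eq_sym => /andP [].
  case: ifP => HxX; case: ifP => HyX.
  - have Hix := Hb _ (QXi x HxQ HxX); have Hiy := Hb _ (QXi y HyQ HyX).
    apply/negP => /eqP /(congr1 (@nat_of_ord _)); rewrite !inordK //.
    by move=> /(index_inj HxX HyX) Exy; rewrite Exy eqxx in Hne.
  - case/andP: (QYi y HyQ (negbT HyX)) => HyY _.
    by have := FX x y HxX HyY; rewrite Hxy'.
  - case/andP: (QYi x HxQ (negbT HxX)) => HxY _.
    by have := FX y x HyX HxY; rewrite Hyx.
  - case/andP: (QYi x HxQ (negbT HxX)) => HxY Hxi.
    case/andP: (QYi y HyQ (negbT HyX)) => HyY Hyi.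
    have Hix := Hb _ Hxi; have Hiy := Hb _ Hyi.
    apply/negP => /eqP /(congr1 (@nat_of_ord _)); rewrite !inordK //.
    by move=> /(index_inj HxY HyY) Exy; rewrite Exy eqxx in Hne.
have Hcol : #|c0 @: Q| <= g.
  have Hsub : c0 @: Q \subset
      (fun j : 'I_g => (inord j : 'I_(F - g).+1)) @: [set: 'I_g].
    apply/subsetP => c /imsetP [u HuQ ->]; rewrite /c0.
    case: ifP => HuX.
      by apply/imsetP; exists (Ordinal (QXi u HuQ HuX)).
    case/andP: (QYi u HuQ (negbT HuX)) => _ Hi.
    by apply/imsetP; exists (Ordinal Hi).
  apply: leq_trans (subset_leq_card Hsub) _.
  by apply: leq_trans (leq_imset_card _ _) _; rewrite cardsT card_ord.
have HQcard : 2 * g <= #|Q|.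
  have HXY : QX :&: QY = set0.
    apply/setP => u; rewrite !inE.
    case HuX: (u \in X); rewrite //=.
    by have := disj u HuX => /negbTE ->; rewrite andbF.
  rewrite /Q cardsU HXY cards0 subn0.
  have H1 : g <= #|QX| := QX_card r HgX.
  have H2 : g <= #|QY| := QX_card r HgY.
  lia.
apply: (greedy (Q := Q) (c0 := c0) (rho := dist r) adj_sym adj_irr HcQ).
move=> v HvQ.
have H1 : #|c0 @: [set u in Q | adj v u]| <= g.
  apply: leq_trans Hcol; apply: subset_leq_card; apply: imsetS.
  by apply/subsetP => u; rewrite inE => /andP [].
case: (leqP (dist r v) s) => Hvs.
  have Hv : v \in within e s r by rewrite within_dist.
  have HQW : Q \subset within e k v :\ v.
    apply/subsetP => u HuQ; rewrite !inE F5 ?QXY // andbT.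
    apply/negP => /eqP Euv; subst u.
    by have := F4 v (QXY v HuQ); rewrite Hv.
  have Hsub : [set u | adj v u & (u \notin Q) && (dist r v <= dist r u)]
      \subset (within e k v :\ v) :\: Q.
    apply/subsetP => u; rewrite !inE adjE !inE => /and3P [/andP [Huv Huk] HuQ _].
    by rewrite HuQ Huv Huk.
  have H2 := subset_leq_card Hsub.
  rewrite cardsD (setIidPr HQW) in H2.
  have H3 := moore esym eirr degD k v.
  lia.
have H := nonproblem Hvs Hk1 Hk0.
have Hsub : [set u | adj v u & (u \notin Q) && (dist r v <= dist r u)]
    \subset within e k v :\: (v |: [set u | dist r u < dist r v]).
  apply/subsetP => u; rewrite !inE adjE !inE => /and3P [/andP [Huv Huk] _ H'].
  by rewrite negb_or (negbTE Huv) /= -leqNgt H' Huk.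
have := subset_leq_card Hsub; lia.
Qed.

Lemma main_chi s a g zL r zR :
  0 < D -> 3 * g <= M D s -> s.+1 + s <= k -> s + a + s <= k ->
  s + s + k < 2 * a -> s + s + a < 2 * a ->
  r \in within e a zL -> zR \in within e a r ->
  (forall n, zR \in within e n zL -> 2 * a <= n) ->
  chi (gpow e k) + g <= Defs.f k D + 1.
Proof.
move=> HD Hg Hk1 Hk2 Hfar1 Hfar2 Hr HzR Hfar.
have Hk0 : 0 < k by lia.
have HMF : M D s <= Defs.f k D.
  case: k Hk1 {Hk2 Hfar1 Hk0} => [//|k'] Hk1.
  rewrite f_M; apply: leq_trans (leq_pmull _ HD).
  by apply: M_mono; lia.
suff Hc : colorable adj (Defs.f k D - g).+1.
  have := chi_le Hc; lia.
have HrL : zL \in within e a r by rewrite (within_sym esym).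
have F4L : forall u, u \in within e s zL -> u \notin within e s r.
  move=> u Hu; apply/negP => Hur.
  have H1 : r \in within e s u by rewrite (within_sym esym).
  have := Hfar _ (within_trans (within_trans Hu H1) HzR); lia.
have F4R : forall u, u \in within e s zR -> u \notin within e s r.
  move=> u Hu; apply/negP => Hur.
  have H1 : zR \in within e s u by rewrite (within_sym esym).
  have := Hfar _ (within_trans (within_trans Hr Hur) H1); lia.
have HzLs := F4L zL (within_self _ _ _).
have HzRs := F4R zR (within_self _ _ _).
case: (leqP (#|within e s zL| + g) (M D s)) => HdL.
  exact: (deficient Hg Hk1 Hk2 Hk0 HrL HzLs HdL).
case: (leqP (#|within e s zR| + g) (M D s)) => HdR.
  exact: (deficient Hg Hk1 Hk2 Hk0 HzR HzRs HdR).
apply: (pairs (r := r) (X := within e s zL) (Y := within e s zR) Hg HMF Hk1 Hk0).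
- move=> u u' Hu Hu'; apply/negP => Huu'.
  have H1 : zR \in within e s u' by rewrite (within_sym esym).
  have := Hfar _ (within_trans (within_trans Hu Huu') H1); lia.
- by move=> u; rewrite inE => /orP [/F4L|/F4R].
- move=> v u Hv; rewrite inE => Hu.
  have Hrv : r \in within e s v by rewrite (within_sym esym).
  apply: (subsetP (within_mono e v Hk2)).
  case/orP: Hu => Hu.
    exact: within_trans (within_trans Hrv HrL) Hu.
  have H1 : u \in within e s zR by [].
  exact: within_trans (within_trans Hrv HzR) H1.
- lia.
- lia.
Qed.

End Main.



Lemma INRD m n : INR (m + n) = (INR m + INR n)%R.
Proof. exact: plus_INR. Qed.

Lemma INRM m n : INR (m * n) = (INR m * INR n)%R.
Proof. exact: mult_INR. Qed.

Lemma INRX m n : INR (m ^ n) = (INR m ^ n)%R.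
Proof.
elim: n => [|n IH] //=.
by rewrite mult_INR IH.
Qed.

Lemma INR_leq m n : m <= n -> (INR m <= INR n)%R.
Proof. by move/leP; apply: le_INR. Qed.

Lemma M_pow D t : (D - 1) ^ t <= M D t.
Proof. by rewrite /M big_ord_recr /= leq_addl. Qed.

Lemma M_S2 D t : M D t.+1 = M D t + (D - 1) ^ t.+1.
Proof. by rewrite /M big_ord_recr. Qed.

Lemma M3 D q : 2 <= D -> 3 * (D - 1) ^ q <= M D q.+2.
Proof.
move=> HD; rewrite !M_S2.
have H1 := M_pow D q.
have H2 : (D - 1) ^ q <= (D - 1) ^ q.+1 by apply: leq_pmull; lia.
have H3 : (D - 1) ^ q.+1 <= (D - 1) ^ q.+2 by apply: leq_pmull; lia.
lia.
Qed.

Lemma deg_le (V : finType) (e : rel V) x : deg e x <= maxdeg e.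
Proof. exact: leq_bigmax. Qed.

Lemma chi_moore (V : finType) (e : rel V) k :
  simple_graph e -> chi (gpow e k) <= Defs.f k (maxdeg e) + 1.
Proof.
move=> [esym eirr].
rewrite addn1; apply: chi_le.
apply: (greedy (Q := set0) (c0 := fun _ => ord0) (rho := fun _ => 0)
          (adj_sym esym k) (adj_irr e k)) => [x y|v _]; first by rewrite inE.
have -> : [set u in set0 | adj e k v u] = set0 by apply/setP => u; rewrite !inE.
rewrite imset0 cards0 add0n.
apply: leq_trans (moore esym eirr (@deg_le V e) k v).
apply: subset_leq_card; apply/subsetP => u.
by rewrite !inE adjE !inE => /andP [/andP [-> ->] _].
Qed.

Lemma big_chi (V : finType) (e : rel V) D k :
  simple_graph e -> connected_graph e -> maxdeg e = D -> 2 <= D -> 36 <= k ->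
  1 + Defs.f (2 * (k %/ 12 + 3 + k %/ 2)).-1 D < #|V| ->
  chi (gpow e k) + (D - 1) ^ (k %/ 12) <= Defs.f k D + 1.
Proof.
move=> [esym eirr] econn HmD HD Hk Hbig.
have degD : forall x, deg e x <= D by move=> x; rewrite -HmD deg_le.
set q := k %/ 12; set s := q.+2; set a := q + 3 + k %/ 2.
have [x0 _] : exists x0 : V, true.
  have /card_gt0P [x1 _] : 0 < #|V| by lia.
  by exists x1.
have [w Hw] : exists w, w \notin within e (2 * a).-1 x0.
  apply/existsP; rewrite -negb_forall; apply/negP => /forallP Hall.
  have Hsub : [set: V] \subset within e (2 * a).-1 x0.
    by apply/subsetP => u _; apply: (Hall u).
  have H1 := subset_leq_card Hsub; rewrite cardsT in H1.
  have H2 := moore esym eirr degD (2 * a).-1 x0.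
  move: (cardsD1 x0 (within e (2 * a).-1 x0)); rewrite within_self add1n.
  rewrite /a /q in H1 H2 *; lia.
have [P [HP Hl Hsz]] := shortest econn x0 w.
have HL : 2 * a <= size P.
  rewrite leqNgt; apply/negP => HL; move: Hw; rewrite (within_dist econn) -Hsz.
  by rewrite -ltnS (ltn_predK (m := 0)) ?HL //; lia.
have Hsz' : size P = dist econn x0 (last x0 P) by rewrite Hl.
set r := nth x0 (x0 :: P) a.
set zR := nth x0 (x0 :: P) (2 * a).
have Hr : r \in within e a x0.
  by have := seg HP (leq0n a) (leq_trans (leq_pmull _ _) HL); rewrite subn0; apply.
have HzR : zR \in within e a r.
  have := seg HP (i := a) (j := 2 * a) _ HL.
  have -> : 2 * a - a = a by lia.
  by apply; lia.
have Hd : dist econn x0 zR = 2 * a by apply: shortest_nth.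
have Hfar : forall n, zR \in within e n x0 -> 2 * a <= n.
  by move=> n; rewrite (within_dist econn) Hd.
have := main_chi esym eirr econn degD (s := s) (a := a) (g := (D - 1) ^ q)
  (k := k) _ (M3 q HD) _ _ _ _ Hr HzR Hfar.
apply; rewrite /s /a /q; lia.
Qed.

Theorem theorem5 :
  exists h : nat -> nat -> R,
    (* h(k, D) = Theta((D-1)^(k/12)) as k -> oo, for each fixed D >= 2 *)
    (forall D : nat, (2 <= D)%N ->
       exists c1 c2 : R, (0 < c1)%R /\ (0 < c2)%R /\
       exists K : nat, forall k : nat, (K <= k)%N ->
         (c1 * Rpower (INR (D - 1)) (INR k / 12) <= h k D)%R /\
         (h k D <= c2 * Rpower (INR (D - 1)) (INR k / 12))%R) /\
    (* only finitely many connected simple graphs G with Delta(G) = D have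
       g_k(G) < h(k, D): their orders are bounded *)
    (forall D k : nat, exists N : nat,
       forall (V : finType) (e : rel V),
         simple_graph e -> connected_graph e -> maxdeg e = D ->
         (gap e k < h k D)%R -> (#|V| <= N)%N).
Proof.
exists (fun k D => if (36 <= k) && (2 <= D) then INR ((D - 1) ^ (k %/ 12)) else 0%R).
split.
  move=> D HD.
  have Hx1 : (1 <= INR (D - 1))%R.
    change 1%R with (INR 1); apply: INR_leq; lia.
  have Hx0 : (0 < INR (D - 1))%R by lra.
  exists (/ INR (D - 1))%R, 1%R; split; first exact: Rinv_0_lt_compat.
  split; first lra.
  exists 36 => k Hk; rewrite Hk HD /=.
  set x := INR (D - 1); set q := k %/ 12.
  have Ek : (INR k / 12 = INR q + INR (k %% 12) / 12)%R.
    have E : k = q * 12 + k %% 12 by rewrite /q -divn_eq.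
    have -> : INR k = (INR q * 12 + INR (k %% 12))%R.
      rewrite {1}E INRD INRM; congr (_ * _ + _)%R; simpl; ring.
    field.
  have Hy0 : (0 <= INR (k %% 12) / 12)%R.
    apply: Rmult_le_pos; [exact: pos_INR | lra].
  have Hy1 : (INR (k %% 12) / 12 <= 1)%R.
    have : (INR (k %% 12) <= INR 12)%R by apply: INR_leq; apply: ltnW; apply: ltn_pmod.
    have -> : INR 12 = 12%R by simpl; ring.
    lra.
  rewrite Ek Rpower_plus Rpower_pow // INRX.
  set R' := Rpower x (INR (k %% 12) / 12).
  have HR1 : (1 <= R')%R.
    by have := Rle_Rpower _ _ _ Hx1 Hy0; rewrite Rpower_O.
  have HRx : (R' <= x)%R.
    by have := Rle_Rpower _ _ _ Hx1 Hy1; rewrite Rpower_1.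
  have HP : (0 < x ^ q)%R by apply: pow_lt.
  have Hinv : (/ x * x = 1)%R by apply: Rinv_l; rewrite /x; lra.
  have Hinv0 : (0 < / x)%R by apply: Rinv_0_lt_compat.
  change (INR (D - 1)) with x.
  have L1 : (x ^ q * R' <= x ^ q * x)%R by apply: Rmult_le_compat_l; lra.
  have L2 : (/ x * (x ^ q * R') <= / x * (x ^ q * x))%R.
    by apply: Rmult_le_compat_l; lra.
  have L3 : (/ x * (x ^ q * x) = x ^ q)%R.
    by rewrite (Rmult_comm (x ^ q)) -Rmult_assoc Hinv Rmult_1_l.
  have L4 : (x ^ q * 1 <= x ^ q * R')%R by apply: Rmult_le_compat_l; lra.
  split; lra.
move=> D k.
case Hc: ((36 <= k) && (2 <= D)).
  case/andP: Hc => Hk HD.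
  exists (1 + Defs.f (2 * (k %/ 12 + 3 + k %/ 2)).-1 D) => V e Hs Hcn Hm Hgap.
  rewrite leqNgt; apply/negP => Hbig.
  have := big_chi Hs Hcn Hm HD Hk Hbig.
  move=> /INR_leq; rewrite !INRD => H.
  change (INR 1) with 1%R in H.
  move: Hgap; rewrite /gap Hm INRD; change (INR 1) with 1%R; lra.
exists 0 => V e Hs Hcn Hm Hgap; exfalso.
have := chi_moore k Hs; move=> /INR_leq; rewrite !INRD => H.
change (INR 1) with 1%R in H.
move: Hgap; rewrite /gap INRD; change (INR 1) with 1%R; lra.
Qed.
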